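(* Let $A\in\mathbb{R}^{N\times N}$, $C\in\mathbb{R}^{N\times D}$, $K<\min(N,D)$, $\alpha,\beta>0$ and $\mu=1$. Consider the joint loss $$\mathcal{L}(G,H,U,V,W,O)=\mathcal{L}_{str}+\alpha\,\mathcal{L}_{attr}+\beta\,\mathcal{L}_{dis},$$ where $$\mathcal{L}_{str}=\sum_{i=1}^N\sum_{j=1}^N\log\!\Big(\tfrac{1}{O_{1i}}\Big)\big(A_{ij}-(GH)_{ij}\big)^2,\qquad \mathcal{L}_{attr}=\sum_{i=1}^N\sum_{d=1}^D\log\!\Big(\tfrac{1}{O_{2i}}\Big)\big(C_{id}-(UV)_{id}\big)^2,$$ $$\mathcal{L}_{dis}=\sum_{i=1}^N\sum_{k=1}^K\log\!\Big(\tfrac{1}{O_{3i}}\Big)\big(G_{ik}-(UW^T)_{ik}\big)^2,$$ with $G,U\in\mathbb{R}^{N\times K}$, $H\in\mathbb{R}^{K\times N}$, $V\in\mathbb{R}^{K\times D}$, $W\in\mathbb{R}^{K\times K}$ orthogonal ($W^TW=I$), and $O=(O_{1i},O_{2i},O_{3i})_{i=1}^N$ satisfying $0<O_{ri}\le 1$ and $\sum_{i=1}^N O_{ri}=\mu$ for $r=1,2,3$. One iteration of ONE performs, in order: (i) replace $W$ by $XY^T$, where $X\Sigma Y^T$ is a singular value decomposition of $\bar G^T\bar U$, with $\bar G_{ik}=\sqrt{\log(1/O_{3i})}\,G_{ik}$ and $\bar U_{ik}=\sqrt{\log(1/O_{3i})}\,U_{ik}$; (ii) replace, one scalar entry at a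 time, each entry of $G$, $H$, $U$, $V$ by the value minimizing $\mathcal{L}$ in that entry with all other variables fixed; (iii) replace the outlier scores by $$O_{1i}=\frac{\mu\sum_{j}(A_{ij}-(GH)_{ij})^2}{\sum_{i',j}(A_{i'j}-(GH)_{i'j})^2},\quad O_{2i}=\frac{\mu\sum_{d}(C_{id}-(UV)_{id})^2}{\sum_{i',d}(C_{i'd}-(UV)_{i'd})^2},\quad O_{3i}=\frac{\mu\sum_{k}(G_{ik}-(UW^T)_{ik})^2}{\sum_{i',k}(G_{i'k}-(UW^T)_{i'k})^2}.$$ Assume that throughout, every row residual appearing in the numerators in (iii) is strictly positive (so that all scores lie in $(0,1]$, except that a score equal to $1$ makes the corresponding weight $0$, which is allowed), and that the minimizers in (ii) exist (e.g. the relevant denominators are positive). Then the value of $\mathcal{L}$ after one iteration is no larger than its value before the iteration; i.e. $\mathcal{L}$ is non-increasing along the iterations of ONE.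
   Context: ONE (Outlier aware Network Embedding) is an alternating minimization scheme for an attributed network with adjacency matrix $A$ (row $i$ describes node $v_i$'s neighbors) and attribute matrix $C$ (row $i$ is the attribute vector of node $v_i$). $G$ is the structural embedding, $U$ the attribute embedding, $W$ an orthogonal map aligning the two embedding spaces, and $O_{1i},O_{2i},O_{3i}$ are the structural, attribute and disagreement outlier scores of node $v_i$. $\mu$ is the total outlier score, set to $1$. *)

(* Defs.v *)
From Stdlib Require Import Reals List.
Open Scope R_scope.

Fixpoint sumR (n : nat) (f : nat -> R) : R :=
  match n with O => 0 | S m => sumR m f + f m end.

(* Matrices are functions nat -> nat -> R; only entries inside the stated
   dimensions are ever used. Vectors of outlier scores are nat -> R. *)
Definition mat := nat -> nat -> R.

Definition mu : R := 1.

Definition mmul (K : nat) (P Q : mat) (i j : nat) : R :=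
  sumR K (fun k => P i k * Q k j).
Definition mmulT (K : nat) (P Q : mat) (i j : nat) : R :=
  sumR K (fun k => P i k * Q j k).

Record state := mkState {
  sG : mat; sH : mat; sU : mat; sV : mat; sW : mat;
  sO1 : nat -> R; sO2 : nat -> R; sO3 : nat -> R }.

Definition L_str (N K : nat) (A : mat) (s : state) : R :=
  sumR N (fun i => sumR N (fun j =>
    ln (1 / sO1 s i) * (A i j - mmul K (sG s) (sH s) i j) ^ 2)).
Definition L_attr (N D K : nat) (C : mat) (s : state) : R :=
  sumR N (fun i => sumR D (fun d =>
    ln (1 / sO2 s i) * (C i d - mmul K (sU s) (sV s) i d) ^ 2)).
Definition L_dis (N K : nat) (s : state) : R :=
  sumR N (fun i => sumR K (fun k =>
    ln (1 / sO3 s i) * (sG s i k - mmulT K (sU s) (sW s) i k) ^ 2)).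

Definition Loss (N D K : nat) (A C : mat) (alpha beta : R) (s : state) : R :=
  L_str N K A s + alpha * L_attr N D K C s + beta * L_dis N K s.

Definition res_str (N K : nat) (A : mat) (s : state) (i : nat) : R :=
  sumR N (fun j => (A i j - mmul K (sG s) (sH s) i j) ^ 2).
Definition res_attr (D K : nat) (C : mat) (s : state) (i : nat) : R :=
  sumR D (fun d => (C i d - mmul K (sU s) (sV s) i d) ^ 2).
Definition res_dis (K : nat) (s : state) (i : nat) : R :=
  sumR K (fun k => (sG s i k - mmulT K (sU s) (sW s) i k) ^ 2).

Definition feasible_scores (N : nat) (O : nat -> R) : Prop :=
  (forall i, (i < N)%nat -> 0 < O i <= 1) /\ sumR N O = mu.

Definition orthogonal (K : nat) (W : mat) : Prop :=
  forall k l, (k < K)%nat -> (l < K)%nat ->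
    sumR K (fun m => W m k * W m l) = if Nat.eqb k l then 1 else 0.

Definition is_svd (K : nat) (M X Sig Y : mat) : Prop :=
  orthogonal K X /\ orthogonal K Y /\
  (forall a b, (a < K)%nat -> (b < K)%nat -> a <> b -> Sig a b = 0) /\
  (forall a, (a < K)%nat -> 0 <= Sig a a) /\
  (forall i j, (i < K)%nat -> (j < K)%nat ->
     M i j = sumR K (fun a => sumR K (fun b => X i a * Sig a b * Y j b))).

Definition Gbar (s : state) : mat := fun i k => sqrt (ln (1 / sO3 s i)) * sG s i k.
Definition Ubar (s : state) : mat := fun i k => sqrt (ln (1 / sO3 s i)) * sU s i k.
Definition GbarT_Ubar (N : nat) (s : state) : mat :=
  fun k l => sumR N (fun i => Gbar s i k * Ubar s i l).

Definition W_update (N K : nat) (s : state) (W' : mat) : Prop :=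
  exists X Sig Y, is_svd K (GbarT_Ubar N s) X Sig Y /\
    forall k l, (k < K)%nat -> (l < K)%nat ->
      W' k l = sumR K (fun m => X k m * Y l m).

Definition setW (s : state) (W' : mat) : state :=
  mkState (sG s) (sH s) (sU s) (sV s) W' (sO1 s) (sO2 s) (sO3 s).

Inductive coord : Type :=
| cG (i k : nat) | cH (k j : nat) | cU (i k : nat) | cV (k d : nat).

Definition valid_coord (N D K : nat) (c : coord) : Prop :=
  match c with
  | cG i k => (i < N)%nat /\ (k < K)%nat
  | cH k j => (k < K)%nat /\ (j < N)%nat
  | cU i k => (i < N)%nat /\ (k < K)%nat
  | cV k d => (k < K)%nat /\ (d < D)%nat
  end.

Definition upd (M : mat) (a b : nat) (x : R) : mat :=
  fun i j => if andb (Nat.eqb i a) (Nat.eqb j b) then x else M i j.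

Definition setc (s : state) (c : coord) (x : R) : state :=
  match c with
  | cG a b => mkState (upd (sG s) a b x) (sH s) (sU s) (sV s) (sW s) (sO1 s) (sO2 s) (sO3 s)
  | cH a b => mkState (sG s) (upd (sH s) a b x) (sU s) (sV s) (sW s) (sO1 s) (sO2 s) (sO3 s)
  | cU a b => mkState (sG s) (sH s) (upd (sU s) a b x) (sV s) (sW s) (sO1 s) (sO2 s) (sO3 s)
  | cV a b => mkState (sG s) (sH s) (sU s) (upd (sV s) a b x) (sW s) (sO1 s) (sO2 s) (sO3 s)
  end.

Inductive cd_chain (f : state -> R) : state -> list coord -> state -> Prop :=
| cd_nil : forall s, cd_chain f s nil s
| cd_cons : forall s c cs x s',
    (forall y, f (setc s c x) <= f (setc s c y)) ->
    cd_chain f (setc s c x) cs s' ->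
    cd_chain f s (c :: cs) s'.

Definition O_update (N D K : nat) (A C : mat) (s : state) : state :=
  mkState (sG s) (sH s) (sU s) (sV s) (sW s)
    (fun i => mu * res_str N K A s i / sumR N (res_str N K A s))
    (fun i => mu * res_attr D K C s i / sumR N (res_attr D K C s))
    (fun i => mu * res_dis K s i / sumR N (res_dis K s)).

(* Main.v *)
Require Import Defs.
From Stdlib Require Import Reals List Lra Lia FunctionalExtensionality.
Open Scope R_scope.
Set Default Goal Selector "1".

Lemma sumR_ext n f g : (forall i, (i < n)%nat -> f i = g i) -> sumR n f = sumR n g.
Proof. induction n; simpl; intros H; auto. rewrite IHn by (intros; apply H; lia). rewrite H by lia; auto. Qed.

Lemma sumR_le n f g : (forall i, (i < n)%nat -> f i <= g i) -> sumR n f <= sumR n g.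
Proof. induction n; simpl; intros H; [lra|]. pose proof (H n ltac:(lia)). pose proof (IHn ltac:(intros; apply H; lia)). lra. Qed.

Lemma sumR_plus n f g : sumR n (fun i => f i + g i) = sumR n f + sumR n g.
Proof. induction n; simpl; [lra|]. rewrite IHn; lra. Qed.

Lemma sumR_minus n f g : sumR n (fun i => f i - g i) = sumR n f - sumR n g.
Proof. induction n; simpl; [lra|]. rewrite IHn; lra. Qed.

Lemma sumR_scal n c f : sumR n (fun i => c * f i) = c * sumR n f.
Proof. induction n; simpl; [lra|]. rewrite IHn; lra. Qed.

Lemma sumR_scalr n c f : sumR n (fun i => f i * c) = sumR n f * c.
Proof. induction n; simpl; [lra|]. rewrite IHn; lra. Qed.

Lemma sumR_0 n : sumR n (fun _ => 0) = 0.
Proof. induction n; simpl; [lra|]. rewrite IHn; lra. Qed.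

Lemma sumR_swap n m (f : nat -> nat -> R) :
  sumR n (fun i => sumR m (fun j => f i j)) = sumR m (fun j => sumR n (fun i => f i j)).
Proof. induction n; simpl. - symmetry; apply sumR_0. - rewrite IHn, <- sumR_plus; auto. Qed.

Lemma sumR_mult n m f g : sumR n f * sumR m g = sumR n (fun i => sumR m (fun j => f i * g j)).
Proof. rewrite <- sumR_scalr. apply sumR_ext; intros. rewrite <- sumR_scal; auto. Qed.

Lemma sumR_delta n a f : (a < n)%nat ->
  sumR n (fun b => (if Nat.eqb a b then 1 else 0) * f b) = f a.
Proof.
  induction n; simpl; intros H; [lia|].
  destruct (Nat.eq_dec a n).
  - subst. rewrite Nat.eqb_refl. rewrite (sumR_ext _ _ (fun _ => 0)).
    + rewrite sumR_0; lra.
    + intros i Hi. destruct (Nat.eqb_spec n i); [lia|lra].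
  - rewrite IHn by lia. destruct (Nat.eqb_spec a n); [lia|lra].
Qed.

Lemma sumR_delta' n a f : (a < n)%nat ->
  sumR n (fun b => f b * (if Nat.eqb b a then 1 else 0)) = f a.
Proof. intros H. rewrite <- (sumR_delta n a f H). apply sumR_ext; intros.
  destruct (Nat.eqb_spec i a), (Nat.eqb_spec a i); subst; try lia; lra. Qed.

Lemma sumR_nonneg n f : (forall i, (i < n)%nat -> 0 <= f i) -> 0 <= sumR n f.
Proof. intros H. rewrite <- (sumR_0 n). apply sumR_le; auto. Qed.

Lemma sumR_pos n f : (0 < n)%nat -> (forall i, (i < n)%nat -> 0 < f i) -> 0 < sumR n f.
Proof. destruct n; [lia|]. intros _ H. simpl. pose proof (H n ltac:(lia)).
  assert (0 <= sumR n f) by (apply sumR_nonneg; intros; left; apply H; lia). lra. Qed.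

Lemma orth_norm K W v : orthogonal K W ->
  sumR K (fun k => (sumR K (fun m => W k m * v m)) ^ 2) = sumR K (fun m => v m ^ 2).
Proof.
  intros HW.
  rewrite (sumR_ext _ _ (fun k => sumR K (fun m => sumR K (fun m' => (W k m * v m) * (W k m' * v m'))))).
  2:{ intros; rewrite <- sumR_mult; ring. }
  rewrite sumR_swap.
  apply sumR_ext; intros m Hm.
  rewrite sumR_swap.
  rewrite (sumR_ext _ _ (fun m' => (if Nat.eqb m m' then 1 else 0) * (v m * v m'))).
  - rewrite sumR_delta by auto. ring.
  - intros m' Hm'. rewrite <- (HW m m' Hm Hm').
    rewrite <- sumR_scalr. apply sumR_ext; intros; ring.
Qed.

Lemma ln_le_sub1 y : 0 < y -> ln y <= y - 1.
Proof. intros Hy. destruct (Rle_or_lt (ln y) (y - 1)); auto.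
  apply exp_increasing in H. rewrite exp_ln in H by auto. pose proof (exp_ineq1_le (y-1)). lra. Qed.

Lemma ln_nonneg x : 1 <= x -> 0 <= ln x.
Proof. intros H. destruct H. - left. rewrite <- ln_1. apply ln_increasing; lra. - subst; rewrite ln_1; lra. Qed.

Lemma gibbs N r O : (forall i, (i < N)%nat -> 0 < r i) -> (forall i, (i < N)%nat -> 0 < O i) ->
  sumR N O = mu ->
  sumR N (fun i => ln (1 / (mu * r i / sumR N r)) * r i) <= sumR N (fun i => ln (1 / O i) * r i).
Proof.
  intros Hr HO HS. unfold mu in *. destruct N as [|N0]; [simpl; lra|].
  set (N := S N0) in *.
  assert (HSp : 0 < sumR N r) by (apply sumR_pos; [unfold N; lia| auto]).
  set (S := sumR N r) in *.
  assert (H0 : sumR N (fun i => r i - S * O i) = 0).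
  { rewrite sumR_minus, sumR_scal, HS. fold S. ring. }
  assert (sumR N (fun i => r i - S * O i) <=
    sumR N (fun i => ln (1 / O i) * r i - ln (1 / (1 * r i / S)) * r i)).
  { apply sumR_le. intros i Hi. pose proof (Hr i Hi). pose proof (HO i Hi).
    replace (1 / O i) with ((1 / (1 * r i / S)) * (r i / (S * O i))) by (field; lra).
    rewrite ln_mult.
    2:{ apply Rdiv_lt_0_compat; [lra|]. apply Rdiv_lt_0_compat; nra. }
    2:{ apply Rdiv_lt_0_compat; nra. }
    replace (r i / (S * O i)) with (/ (S * O i / r i)) by (field; split; lra).
    rewrite ln_Rinv by (apply Rdiv_lt_0_compat; nra).
    pose proof (ln_le_sub1 (S * O i / r i) ltac:(apply Rdiv_lt_0_compat; nra)).
    assert (r i * (S * O i / r i) = S * O i) by (field; lra).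
    set (y := S * O i / r i) in *. set (a := ln (1 / (1 * r i / S))).
    assert (0 <= r i * (y - 1 - ln y)) by (apply Rmult_le_pos; lra).
    assert (E : (a + - ln y) * r i - a * r i = - (r i * ln y)) by ring.
    rewrite E. assert (E2 : r i * (y - 1 - ln y) = r i * y - r i - r i * ln y) by ring.
    clearbody y a S. clear -E2 H4 H3. lra. }
  rewrite sumR_minus in H. rewrite sumR_minus in H0. rewrite sumR_minus in H. lra.
Qed.

Lemma orth_diag K X a : orthogonal K X -> (a < K)%nat -> sumR K (fun k => X k a ^ 2) = 1.
Proof. intros H Ha. replace 1 with (if Nat.eqb a a then 1 else 0) by (rewrite Nat.eqb_refl; auto). rewrite <- (H a a Ha Ha).
  apply sumR_ext; intros; ring. Qed.

Lemma cs_half K x v : sumR K (fun k => x k * v k) <=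
  (sumR K (fun k => x k ^ 2) + sumR K (fun k => v k ^ 2)) / 2.
Proof.
  assert (0 <= sumR K (fun k => (x k - v k) ^ 2)) by (apply sumR_nonneg; intros; apply pow2_ge_0).
  rewrite (sumR_ext _ _ (fun k => x k ^ 2 + v k ^ 2 - 2 * (x k * v k))) in H by (intros; ring).
  rewrite sumR_minus, sumR_plus, sumR_scal in H. lra.
Qed.

Lemma bessel K Y u : orthogonal K Y ->
  sumR K (fun c => (sumR K (fun m => Y m c * u m)) ^ 2) <= sumR K (fun m => u m ^ 2).
Proof.
  intros HY. set (v := fun c => sumR K (fun m => Y m c * u m)).
  assert (0 <= sumR K (fun m => (u m - sumR K (fun c => Y m c * v c)) ^ 2))
    by (apply sumR_nonneg; intros; apply pow2_ge_0).
  rewrite (sumR_ext _ _ (fun m => u m ^ 2 + (sumR K (fun c => Y m c * v c)) ^ 2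
      - 2 * (u m * sumR K (fun c => Y m c * v c)))) in H by (intros; ring).
  rewrite sumR_minus, sumR_plus, sumR_scal, orth_norm in H by auto.
  assert (E : sumR K (fun m => u m * sumR K (fun c => Y m c * v c)) = sumR K (fun c => v c ^ 2)).
  { rewrite (sumR_ext _ _ (fun m => sumR K (fun c => v c * (Y m c * u m)))).
    2:{ intros. rewrite <- sumR_scal. apply sumR_ext; intros; ring. }
    rewrite sumR_swap. apply sumR_ext; intros c Hc. rewrite sumR_scal. unfold v. ring. }
  rewrite E in H. unfold v in *. lra.
Qed.

Lemma trace_form K M X Sig Y W : is_svd K M X Sig Y ->
  sumR K (fun k => sumR K (fun m => W k m * M k m)) =
  sumR K (fun a => Sig a a * sumR K (fun k => sumR K (fun m => X k a * W k m * Y m a))).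
Proof.
  intros (HX & HY & Hoff & Hpos & HM).
  rewrite (sumR_ext _ _ (fun k => sumR K (fun m => sumR K (fun a => Sig a a * (X k a * W k m * Y m a))))).
  2:{ intros k Hk. apply sumR_ext; intros m Hm. rewrite HM by auto.
      rewrite <- sumR_scal. apply sumR_ext; intros a Ha.
      rewrite (sumR_ext _ _ (fun b => (if Nat.eqb a b then 1 else 0) * (X k a * Sig a b * Y m b))).
      - rewrite sumR_delta by auto. ring.
      - intros b Hb. destruct (Nat.eqb_spec a b). + subst; ring. + rewrite Hoff by auto; ring. }
  rewrite (sumR_ext _ _ (fun k => sumR K (fun a => sumR K (fun m => Sig a a * (X k a * W k m * Y m a))))).
  2:{ intros; apply sumR_swap. }
  rewrite sumR_swap. apply sumR_ext; intros a Ha. rewrite <- sumR_scal. apply sumR_ext; intros.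
  rewrite <- sumR_scal. auto.
Qed.

Lemma z_W1 K X Y a : orthogonal K X -> orthogonal K Y -> (a < K)%nat ->
  sumR K (fun k => sumR K (fun m => X k a * sumR K (fun c => X k c * Y m c) * Y m a)) = 1.
Proof.
  intros HX HY Ha.
  rewrite (sumR_ext _ _ (fun k => sumR K (fun m => sumR K (fun c => (X k a * X k c) * (Y m c * Y m a))))).
  2:{ intros; apply sumR_ext; intros. rewrite <- sumR_scal, <- sumR_scalr. apply sumR_ext; intros; ring. }
  rewrite (sumR_ext _ _ (fun k => sumR K (fun c => sumR K (fun m => (X k a * X k c) * (Y m c * Y m a))))).
  2:{ intros; apply sumR_swap. }
  rewrite sumR_swap.
  rewrite (sumR_ext _ _ (fun c => (if Nat.eqb a c then 1 else 0) * (if Nat.eqb c a then 1 else 0))).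
  - rewrite sumR_delta by auto. rewrite Nat.eqb_refl. ring.
  - intros c Hc. rewrite <- HX, <- HY by auto. rewrite sumR_mult. auto.
Qed.

Lemma z_W0 K X Y W a : orthogonal K X -> orthogonal K Y -> orthogonal K W -> (a < K)%nat ->
  sumR K (fun k => sumR K (fun m => X k a * W k m * Y m a)) <= 1.
Proof.
  intros HX HY HW Ha.
  rewrite (sumR_ext _ _ (fun k => X k a * sumR K (fun m => W k m * Y m a))).
  2:{ intros. rewrite <- sumR_scal. apply sumR_ext; intros; ring. }
  eapply Rle_trans; [apply cs_half|]. cbv beta.
  rewrite orth_norm by auto. rewrite !orth_diag by auto. lra.
Qed.

Lemma procrustes K M X Sig Y W0 : is_svd K M X Sig Y -> orthogonal K W0 ->
  sumR K (fun k => sumR K (fun m => W0 k m * M k m)) <=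
  sumR K (fun k => sumR K (fun m => sumR K (fun c => X k c * Y m c) * M k m)).
Proof.
  intros Hs HW. rewrite !(trace_form K M X Sig Y) by auto.
  destruct Hs as (HX & HY & Hoff & Hpos & HM).
  apply sumR_le; intros a Ha. rewrite z_W1 by auto.
  pose proof (z_W0 K X Y W0 a HX HY HW Ha). pose proof (Hpos a Ha). nra.
Qed.

Lemma Ldis_form N K s : (forall i, (i < N)%nat -> 0 <= ln (1 / sO3 s i)) ->
  L_dis N K s = sumR N (fun i => ln (1 / sO3 s i) * sumR K (fun k => sG s i k ^ 2))
   + sumR N (fun i => ln (1 / sO3 s i) * sumR K (fun k => mmulT K (sU s) (sW s) i k ^ 2))
   - 2 * sumR K (fun k => sumR K (fun m => sW s k m * GbarT_Ubar N s k m)).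
Proof.
  intros Hw. unfold L_dis.
  set (w := fun i => ln (1 / sO3 s i)).
  rewrite (sumR_ext N _ (fun i => w i * sumR K (fun k => sG s i k ^ 2) +
     w i * sumR K (fun k => mmulT K (sU s) (sW s) i k ^ 2) -
     2 * (w i * sumR K (fun k => sG s i k * mmulT K (sU s) (sW s) i k)))).
  2:{ intros i Hi. rewrite <- !sumR_scal, <- sumR_plus, <- sumR_minus.
      apply sumR_ext; intros; unfold w; ring. }
  rewrite sumR_minus, sumR_plus, sumR_scal. f_equal. f_equal.
  unfold GbarT_Ubar, Gbar, Ubar, mmulT.
  rewrite (sumR_ext N _ (fun i => sumR K (fun k => sumR K (fun m => sW s k m * (w i * sG s i k * sU s i m))))).
  2:{ intros i Hi. rewrite <- sumR_scal. apply sumR_ext; intros k Hk.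
      rewrite <- sumR_scal, <- sumR_scal. apply sumR_ext; intros; ring. }
  rewrite sumR_swap. apply sumR_ext; intros k Hk. rewrite sumR_swap.
  apply sumR_ext; intros m Hm. rewrite <- sumR_scal. apply sumR_ext; intros i Hi.
  pose proof (sqrt_sqrt _ (Hw i Hi)). unfold w. rewrite <- H at 1. ring.
Qed.

Lemma Ldis_step N K s0 W1 : orthogonal K (sW s0) -> W_update N K s0 W1 ->
  (forall i, (i < N)%nat -> 0 < sO3 s0 i <= 1) ->
  L_dis N K (setW s0 W1) <= L_dis N K s0.
Proof.
  intros HW0 [X [Sig [Y [Hsvd HW1]]]] HO.
  assert (Hw : forall i, (i < N)%nat -> 0 <= ln (1 / sO3 s0 i)).
  { intros i Hi. destruct (HO i Hi). apply ln_nonneg.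
    apply (Rmult_le_reg_r (sO3 s0 i)); auto. field_simplify; lra. }
  rewrite (Ldis_form N K (setW s0 W1)) by exact Hw.
  rewrite (Ldis_form N K s0) by exact Hw. simpl.
  assert (HQ : sumR N (fun i => ln (1 / sO3 s0 i) * sumR K (fun k => mmulT K (sU s0) W1 i k ^ 2))
     <= sumR N (fun i => ln (1 / sO3 s0 i) * sumR K (fun k => mmulT K (sU s0) (sW s0) i k ^ 2))).
  { apply sumR_le; intros i Hi. apply Rmult_le_compat_l; [auto|].
    destruct Hsvd as (HX & HY & _).
    unfold mmulT.
    rewrite (sumR_ext K (fun k => sumR K (fun m => sU s0 i m * sW s0 k m) ^ 2)
      (fun k => sumR K (fun m => sW s0 k m * sU s0 i m) ^ 2))
      by (intros; f_equal; apply sumR_ext; intros; ring).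
    rewrite orth_norm by auto.
    rewrite (sumR_ext K _ (fun k => sumR K (fun c => X k c * sumR K (fun m => Y m c * sU s0 i m)) ^ 2)).
    2:{ intros k Hk. f_equal.
        rewrite (sumR_ext K _ (fun m => sumR K (fun c => X k c * (Y m c * sU s0 i m)))).
        2:{ intros m Hm. rewrite HW1 by auto. rewrite <- sumR_scal. apply sumR_ext; intros; ring. }
        rewrite sumR_swap. apply sumR_ext; intros. rewrite sumR_scal. auto. }
    rewrite orth_norm by auto. apply bessel; auto. }
  assert (HT : sumR K (fun k => sumR K (fun m => sW s0 k m * GbarT_Ubar N s0 k m)) <=
    sumR K (fun k => sumR K (fun m => W1 k m * GbarT_Ubar N s0 k m))).
  { rewrite (sumR_ext K (fun k => sumR K (fun m => W1 k m * GbarT_Ubar N s0 k m))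
      (fun k => sumR K (fun m => sumR K (fun c => X k c * Y m c) * GbarT_Ubar N s0 k m))).
    - eapply procrustes; eauto.
    - intros; apply sumR_ext; intros; rewrite HW1; auto. }
  unfold setW, GbarT_Ubar, Gbar, Ubar in *. simpl in *. lra.
Qed.

Definition getc (s : state) (c : coord) : R :=
  match c with cG a b => sG s a b | cH a b => sH s a b | cU a b => sU s a b | cV a b => sV s a b end.

Lemma upd_id M a b : upd M a b (M a b) = M.
Proof. extensionality i; extensionality j. unfold upd.
  destruct (Nat.eqb_spec i a), (Nat.eqb_spec j b); subst; auto. Qed.

Lemma setc_id s c : setc s c (getc s c) = s.
Proof. destruct s, c; simpl; rewrite upd_id; auto. Qed.

Lemma cd_chain_le f s cs s' : cd_chain f s cs s' -> f s' <= f s.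
Proof. induction 1. - lra. - pose proof (H (getc s c)). rewrite setc_id in H1. lra. Qed.

Lemma cd_chain_O f s cs s' : cd_chain f s cs s' ->
  sO1 s' = sO1 s /\ sO2 s' = sO2 s /\ sO3 s' = sO3 s.
Proof. induction 1. - auto. - destruct IHcd_chain as (?&?&?). destruct c; simpl in *; auto. Qed.

Lemma sum_w N M (w : nat -> R) (e : nat -> nat -> R) :
  sumR N (fun i => sumR M (fun j => w i * e i j)) = sumR N (fun i => w i * sumR M (e i)).
Proof. apply sumR_ext; intros. apply sumR_scal. Qed.

Theorem mainTheorem1 (N D K : nat) (A C : mat) (alpha beta : R)
  (s0 : state) (W1 : mat) (cs : list coord) (s2 : state) :
  (K < N)%nat -> (K < D)%nat -> 0 < alpha -> 0 < beta ->
  (* current iterate: W orthogonal, outlier scores feasible *)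
  orthogonal K (sW s0) ->
  feasible_scores N (sO1 s0) -> feasible_scores N (sO2 s0) ->
  feasible_scores N (sO3 s0) ->
  (* step (i) *)
  W_update N K s0 W1 ->
  (* step (ii): every entry of G, H, U, V updated exactly once, in the order cs *)
  NoDup cs -> (forall c, In c cs <-> valid_coord N D K c) ->
  cd_chain (Loss N D K A C alpha beta) (setW s0 W1) cs s2 ->
  (* positivity of row residuals used in step (iii) *)
  (forall i, (i < N)%nat -> 0 < res_str N K A s2 i) ->
  (forall i, (i < N)%nat -> 0 < res_attr D K C s2 i) ->
  (forall i, (i < N)%nat -> 0 < res_dis K s2 i) ->
  (* step (iii) and conclusion *)
  Loss N D K A C alpha beta (O_update N D K A C s2)
    <= Loss N D K A C alpha beta s0.
Proof.
  intros HKN HKD Ha Hb HW0 [HO1 HS1] [HO2 HS2] [HO3 HS3] HWu _ _ Hch Hr1 Hr2 Hr3.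
  pose proof (cd_chain_le _ _ _ _ Hch) as Hle2.
  destruct (cd_chain_O _ _ _ _ Hch) as (E1 & E2 & E3). simpl in E1, E2, E3.
  assert (Hstep1 : Loss N D K A C alpha beta (setW s0 W1) <= Loss N D K A C alpha beta s0).
  { unfold Loss. pose proof (Ldis_step N K s0 W1 HW0 HWu HO3).
    assert (L_str N K A (setW s0 W1) = L_str N K A s0) by reflexivity.
    assert (L_attr N D K C (setW s0 W1) = L_attr N D K C s0) by reflexivity.
    nra. }
  assert (Hstep3 : Loss N D K A C alpha beta (O_update N D K A C s2) <= Loss N D K A C alpha beta s2).
  { unfold Loss.
    assert (L_str N K A (O_update N D K A C s2) <= L_str N K A s2).
    { unfold L_str, O_update; simpl. rewrite !sum_w. rewrite E1.
      apply gibbs; auto. intros i Hi; apply HO1; auto. }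
    assert (L_attr N D K C (O_update N D K A C s2) <= L_attr N D K C s2).
    { unfold L_attr, O_update; simpl. rewrite !sum_w. rewrite E2.
      apply gibbs; auto. intros i Hi; apply HO2; auto. }
    assert (L_dis N K (O_update N D K A C s2) <= L_dis N K s2).
    { unfold L_dis, O_update; simpl. rewrite !sum_w. rewrite E3.
      apply gibbs; auto. intros i Hi; apply HO3; auto. }
    nra. }
  lra.
Qed.
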